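(* Consider a buyer with linear valuation $v(\mathbf{x})=\sum_{j=1}^m\tau_jx_j$ ($\tau_j\ge0$) and budget $b\in\mathbb{R}_{\ge0}$. Let $\mathbf{p}$ be a monotone lower-continuous pricing function and $\hat{\mathbf{p}}=\mathrm{conv}(\mathbf{p})$. Then $r(\hat{\mathbf{p}}\mid v,b)\ge r(\mathbf{p}\mid v,b)$.
   Context: A pricing function is a monotone $\mathbf{p}:[0,1]^m\to\mathbb{R}_{\ge0}$ with $\mathbf{p}(\mathbf{0})=0$. For budget $b\in\mathbb{R}_{\ge0}\cup\{\infty\}$: $F(\mathbf{p}\mid b)=\{\mathbf{x}:\mathbf{p}(\mathbf{x})\le b\}$; $u^*=\sup_{\mathbf{x}\in F}(v(\mathbf{x})-\mathbf{p}(\mathbf{x}))$; $\mathrm{Dem}(\mathbf{p}\mid v,b)=\{\mathbf{x}\in F:v(\mathbf{x})-\mathbf{p}(\mathbf{x})=u^*\}$; $r(\mathbf{p}\mid v,b)=\sup_{\mathbf{x}\in\mathrm{Dem}}\mathbf{p}(\mathbf{x})$. $\mathrm{conv}(\mathbf{p})(\mathbf{x})=\inf U(\mathbf{x})$ where $U(\mathbf{x})$ is the set of $y$ for which there exist $k\in\mathbb{N}$, $\lambda\in[0,1]^k$ with $\sum\lambda_i=1$, and $\mathbf{x}^{(i)}\in[0,1]^m$ with $\mathbf{x}=\sum\lambda_i\mathbf{x}^{(i)}$ and $y\ge\sum\lambda_i\mathbf{p}(\mathbf{x}^{(i)})$. Lower-continuous: $f(\hat{\mathbf{x}})=\sup_{\delta>0}\inf_{\|\mathbf{x}-\hat{\mathbf{x}}\|_\infty\le\delta}f(\mathbf{x})$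 for all $\hat{\mathbf{x}}$. *)

(* Defs.v *)
From HB Require Import structures.
From mathcomp Require Import all_boot all_order all_algebra.
From mathcomp Require Import boolp classical_sets reals constructive_ereal ereal.
Set Implicit Arguments. Unset Strict Implicit. Unset Printing Implicit Defensive.
Import Order.TTheory GRing.Theory Num.Theory.
Local Open Scope classical_set_scope.
Local Open Scope ring_scope.

Section Pricing.
Variables (R : realType) (m : nat).

Definition cube : set ('I_m -> R) := [set x | forall j, 0 <= x j <= 1].

Definition vle (x y : 'I_m -> R) := forall j, x j <= y j.

Definition pricing_function (p : ('I_m -> R) -> R) : Prop :=
  [/\ forall x, cube x -> 0 <= p x,
      forall x y, cube x -> cube y -> vle x y -> p x <= p y
    & p (fun _ => 0) = 0].

Definition linval (tau : 'I_m -> R) (x : 'I_m -> R) : R := \sum_(j < m) tau j * x j.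

Definition feasible (p : ('I_m -> R) -> R) (b : R) : set ('I_m -> R) :=
  [set x | cube x /\ p x <= b].

Definition ustar (p v : ('I_m -> R) -> R) (b : R) : \bar R :=
  ereal_sup [set ((v x - p x)%:E) | x in feasible p b].

Definition demand (p v : ('I_m -> R) -> R) (b : R) : set ('I_m -> R) :=
  [set x | feasible p b x /\ (v x - p x)%:E = ustar p v b].

(* revenue r(p | v, b) = sup over Dem of p (= -oo if Dem is empty) *)
Definition revenue (p v : ('I_m -> R) -> R) (b : R) : \bar R :=
  ereal_sup [set (p x)%:E | x in demand p v b].

Definition conv_upper (p : ('I_m -> R) -> R) (x : 'I_m -> R) : set R :=
  [set y | exists (k : nat) (lam : 'I_k -> R) (xs : 'I_k -> 'I_m -> R),
      [/\ forall i, 0 <= lam i <= 1,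
          \sum_(i < k) lam i = 1,
          forall i, cube (xs i),
          x = (fun j => \sum_(i < k) lam i * xs i j)
        & \sum_(i < k) lam i * p (xs i) <= y]].

Definition conv (p : ('I_m -> R) -> R) (x : 'I_m -> R) : R := inf (conv_upper p x).

Definition lower_continuous (f : ('I_m -> R) -> R) : Prop :=
  forall xh, cube xh ->
    f xh = sup [set inf [set f x | x in [set x | cube x /\
                                       forall j, `|x j - xh j| <= d]]
               | d in [set d : R | 0 < d]].

End Pricing.

(* Main.v *)
Require Import Defs.
From HB Require Import structures.
From mathcomp Require Import all_boot all_order all_algebra.
From mathcomp Require Import boolp classical_sets reals constructive_ereal ereal.
From mathcomp Require Import topology normedtype.
From mathcomp Require Import ring lra.
Import Order.TTheory GRing.Theory Num.Theory.
Import numFieldNormedType.Exports.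
Local Open Scope classical_set_scope.
Local Open Scope ring_scope.
Set Implicit Arguments. Unset Strict Implicit. Unset Printing Implicit Defensive.
Section S.
Variables (R : realType).

Lemma sumL1 k (P : pred 'I_k) (lam g : 'I_k -> R) :
  (forall i, P i -> lam i * g i <= 0) -> \sum_(i | P i) lam i * g i <= 0.
Proof.
move=> H; rewrite -oppr_ge0 -sumrN; apply: sumr_ge0 => i /H; by rewrite oppr_ge0.
Qed.

Lemma sumL2 k (P : pred 'I_k) (lam g : 'I_k -> R) :
  (forall i, P i -> 0 <= lam i) -> (forall i, P i -> g i < 0) ->
  0 < \sum_(i | P i) lam i -> \sum_(i | P i) lam i * g i < 0.
Proof.
move=> H0 Hg Hs.
have [i0 [Pi0 Hi0]] : exists i0, P i0 /\ 0 < lam i0.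
  apply/not_existsP => /= Hn; move: Hs; apply/negP; rewrite -leNgt.
  rewrite -oppr_ge0 -sumrN; apply: sumr_ge0 => i Pi.
  have := Hn i; rewrite oppr_ge0 => /not_andP [//|/negP]; by rewrite -leNgt.
rewrite (bigD1 i0) //=.
have : \sum_(i | P i && (i != i0)) lam i * g i <= 0.
  apply: sumL1 => i /andP [Pi _]; rewrite mulr_ge0_le0 //; first exact: H0.
  exact/ltW/Hg.
have : lam i0 * g i0 < 0 by rewrite pmulr_rlt0 //; exact: Hg.
lra.
Qed.

Lemma sumL3 k (P : pred 'I_k) (lam g : 'I_k -> R) :
  (forall i, P i -> 0 <= lam i) -> \sum_(i | P i) lam i <= 0 ->
  \sum_(i | P i) lam i * g i = 0.
Proof.
move=> H0 Hs.
have Hz : \sum_(i | P i) lam i = 0.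
  by apply/eqP; rewrite eq_le Hs sumr_ge0.
have := psumr_eq0P H0 Hz => Hz'.
by apply: big1 => i Pi; rewrite Hz' // mul0r.
Qed.

Lemma two_point k (lam c w : 'I_k -> R) (B : R) :
  (forall i, 0 <= lam i) -> \sum_i lam i = 1 -> \sum_i lam i * c i <= B ->
  exists i j t, [/\ 0 <= t <= 1, t * c i + (1 - t) * c j <= B &
     \sum_i lam i * w i <= t * w i + (1 - t) * w j].
Proof.
move=> H0 H1 HB; set W := \sum_i lam i * w i.
case: (pselect (exists i, c i <= B /\ W <= w i)) => [[i [Hc Hw]]|N1].
  by exists i, i, 1; split; rewrite ?ler01 ?lexx //; lra.
case: (pselect (exists i j, [/\ c i <= B, B < c j &
   0 <= (c j - B) * (w i - W) + (B - c i) * (w j - W)])) => [[i [j [Hi Hj Hs]]]|N2].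
  have hd : 0 < c j - c i by lra.
  exists i, j, ((c j - B) / (c j - c i)); split.
  - apply/andP; split; first by apply: divr_ge0; lra.
    by rewrite ler_pdivrMr // mul1r; lra.
  - have -> : (c j - B) / (c j - c i) * c i + (1 - (c j - B) / (c j - c i)) * c j = B.
      by field; rewrite gt_eqF.
    exact: lexx.
  - rewrite -subr_ge0.
    have -> : (c j - B) / (c j - c i) * w i + (1 - (c j - B) / (c j - c i)) * w j - W
       = ((c j - B) * (w i - W) + (B - c i) * (w j - W)) / (c j - c i).
      by field; rewrite gt_eqF.
    by apply: divr_ge0 => //; exact: ltW.
exfalso.
have E1 i : c i <= B -> w i - W < 0.
  move=> Hi; rewrite subr_lt0 ltNge; apply/negP => Hw; apply: N1; by exists i.
have E2 i j : c i <= B -> B < c j ->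
    (c j - B) * (w i - W) + (B - c i) * (w j - W) < 0.
  move=> Hi Hj; rewrite ltNge; apply/negP => Hs; apply: N2; by exists i, j.
set F := fun i => c i <= B.
pose LF := \sum_(i | F i) lam i. pose LI := \sum_(i | ~~ F i) lam i.
pose DF := \sum_(i | F i) lam i * (w i - W). pose DI := \sum_(i | ~~ F i) lam i * (w i - W).
pose AF := \sum_(i | F i) lam i * (B - c i). pose AI := \sum_(i | ~~ F i) lam i * (B - c i).
have hL : LF + LI = 1 by rewrite -H1 (bigID F) /=.
have hD : DF + DI = 0.
  rewrite /DF /DI.
  have -> : forall G : 'I_k -> R, \sum_(i | F i) G i + \sum_(i | ~~ F i) G i = \sum_i G i.
    by move=> G; rewrite [RHS](bigID F) /=.
  under eq_bigr do rewrite mulrBr.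
  by rewrite sumrB -mulr_suml H1 mul1r subrr.
have hA : 0 <= AF + AI.
  rewrite /AF /AI.
  have -> : forall G : 'I_k -> R, \sum_(i | F i) G i + \sum_(i | ~~ F i) G i = \sum_i G i.
    by move=> G; rewrite [RHS](bigID F) /=.
  under eq_bigr do rewrite mulrBr.
  by rewrite sumrB -mulr_suml H1 mul1r subr_ge0.
have hLF : 0 <= LF by apply: sumr_ge0.
have hLI : 0 <= LI by apply: sumr_ge0.
have nI j : ~~ F j -> B < c j by rewrite /F -ltNge.
have [LF0|LFp] := lerP LF 0.
  have : AF = 0 by apply: sumL3.
  have hLI' : 0 < LI by lra.
  have : AI < 0.
    rewrite /AI; apply: (@sumL2 _ _ _ _ (fun i _ => H0 i)) => [j /nI|]; [lra| exact: hLI'].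
  lra.
have [LI0|LIp] := lerP LI 0.
  have : DI = 0 by apply: sumL3.
  have : DF < 0 by rewrite /DF; apply: (@sumL2 _ _ _ _ (fun i _ => H0 i)) => [i /E1 //|]; exact: LFp.
  lra.
have hDF : DF < 0 by rewrite /DF; apply: (@sumL2 _ _ _ _ (fun i _ => H0 i)) => [i /E1 //|]; exact: LFp.
have inner j : ~~ F j -> (c j - B) * DF + AF * (w j - W) < 0.
  move=> Fj.
  have -> : (c j - B) * DF + AF * (w j - W) =
     \sum_(i | F i) lam i * ((c j - B) * (w i - W) + (B - c i) * (w j - W)).
    rewrite /DF /AF mulr_sumr mulr_suml -big_split /=.
    by apply: eq_bigr => i _; ring.
  apply: (@sumL2 _ _ _ _ (fun i _ => H0 i)) => [i Fi|]; last exact: LFp.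
  by apply: E2 => //; exact: nI.
have outer : \sum_(j | ~~ F j) lam j * ((c j - B) * DF + AF * (w j - W)) < 0.
  by apply: (@sumL2 _ _ _ _ (fun i _ => H0 i)) => [j /inner //|]; exact: LIp.
have : \sum_(j | ~~ F j) lam j * ((c j - B) * DF + AF * (w j - W)) =
   - AI * DF + AF * DI.
  have -> : - AI * DF + AF * DI = \sum_(j | ~~F j) (- (lam j * (B - c j)) * DF + AF * (lam j * (w j - W))).
    by rewrite big_split /= -mulr_suml -mulr_sumr sumrN.
  by apply: eq_bigr => i _; ring.
nra.
Qed.
End S.

Section Basic.
Variables (R : realType) (m : nat) (tau : 'I_m -> R) (p : ('I_m -> R) -> R).
Hypotheses (tau0 : forall j, 0 <= tau j) (pf : pricing_function p).
Local Notation v := (linval tau).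
Local Notation ph := (conv p).

Lemma cube0 : cube (fun _ : 'I_m => 0 : R).
Proof. by move=> j; rewrite lexx ler01. Qed.

Lemma p_ge0 x : cube x -> 0 <= p x.
Proof. by case: pf => H _ _; apply: H. Qed.

Lemma v_ge0 x : cube x -> 0 <= v x.
Proof.
move=> cx; apply: sumr_ge0 => j _; apply: mulr_ge0 => //.
by case/andP: (cx j).
Qed.

Lemma v_le x : cube x -> v x <= \sum_j tau j.
Proof.
move=> cx; apply: ler_sum => j _; rewrite ler_piMr //.
by case/andP: (cx j).
Qed.

Lemma cu_one x : cube x -> conv_upper p x (p x).
Proof.
move=> cx; exists 1%N, (fun _ => 1), (fun _ => x); split.
- by move=> _; rewrite lexx ler01.
- by rewrite big_ord1.
- by [].
- by apply: funext => j; rewrite big_ord1 mul1r.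
- by rewrite big_ord1 mul1r.
Qed.

Lemma cu_lb x y : conv_upper p x y -> 0 <= y.
Proof.
move=> [k [lam [xs [Hl _ Hc _ Hy]]]]; apply: le_trans Hy.
apply: sumr_ge0 => i _; apply: mulr_ge0; first by case/andP: (Hl i).
exact: p_ge0.
Qed.

Lemma cu_has_inf x : cube x -> has_inf (conv_upper p x).
Proof.
move=> cx; split; first by exists (p x); exact: cu_one.
by exists 0 => y /cu_lb.
Qed.

Lemma ph_ge0 x : cube x -> 0 <= ph x.
Proof.
move=> cx; apply: lb_le_inf; first by exists (p x); exact: cu_one.
by move=> y /cu_lb.
Qed.

Lemma ph_le_cu x y : cube x -> conv_upper p x y -> ph x <= y.
Proof. by move=> cx; apply: ge_inf; case: (cu_has_inf cx). Qed.

Lemma ph_le_p x : cube x -> ph x <= p x.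
Proof. by move=> cx; apply: ph_le_cu => //; exact: cu_one. Qed.

Lemma ph_rep x e : cube x -> 0 < e -> exists k (lam : 'I_k -> R) xs,
  [/\ forall i, 0 <= lam i, \sum_i lam i = 1, forall i, cube (xs i),
      x = (fun j => \sum_(i < k) lam i * xs i j)
    & \sum_i lam i * p (xs i) <= ph x + e].
Proof.
move=> cx e0; have [y Hy Hlt] := inf_adherent e0 (cu_has_inf cx).
move: Hy => [k [lam [xs [Hl H1 Hc Hx Hy]]]].
exists k, lam, xs; split => //; first by move=> i; case/andP: (Hl i).
by apply: le_trans Hy _; apply: ltW.
Qed.

Definition comb2 (t : R) (f g : 'I_m -> R) := fun j => t * f j + (1 - t) * g j.

Lemma cube2 t f g : 0 <= t <= 1 -> cube f -> cube g -> cube (comb2 t f g).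
Proof.
move=> /andP [t0 t1] cf cg j; rewrite /comb2.
move: (cf j) (cg j) => /andP [f0 f1] /andP [g0 g1].
apply/andP; split; nra.
Qed.

Lemma v2 t f g : v (comb2 t f g) = t * v f + (1 - t) * v g.
Proof.
rewrite /linval /comb2 !mulr_sumr -big_split /=; apply: eq_bigr => j _; ring.
Qed.

Lemma ph2 t f g : 0 <= t <= 1 -> cube f -> cube g ->
  ph (comb2 t f g) <= t * p f + (1 - t) * p g.
Proof.
move=> /andP [t0 t1] cf cg; apply: ph_le_cu.
  by apply: cube2 => //; apply/andP.
exists 2%N, (fun i : 'I_2 => if i == ord0 then t else 1 - t),
  (fun i : 'I_2 => if i == ord0 then f else g); split.
- by case=> [[|[|]]] //= _; apply/andP; split; lra.
- by rewrite big_ord_recl big_ord1 /=; ring.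
- by case=> [[|[|]]].
- by apply: funext => j; rewrite big_ord_recl big_ord1 /=.
- by rewrite big_ord_recl big_ord1 /=.
Qed.

Lemma vcomb k (lam : 'I_k -> R) xs :
  v (fun j => \sum_(i < k) lam i * xs i j) = \sum_i lam i * v (xs i).
Proof.
rewrite /linval; under eq_bigr do rewrite mulr_sumr.
rewrite exchange_big /=; apply: eq_bigr => i _; rewrite mulr_sumr.
by apply: eq_bigr => j _; ring.
Qed.


Lemma lsc_approx (plc : lower_continuous p) f e : cube f -> 0 < e ->
  exists2 d, 0 < d & forall g, cube g -> (forall j, `|g j - f j| <= d) -> p f - e < p g.
Proof.
move=> cf e0.
set T := fun d : R => [set p x | x in [set x | cube x /\ forall j, `|x j - f j| <= d]].
have Tlb d y : T d y -> 0 <= y by move=> [x [cx _] <-]; exact: p_ge0.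
have fT d : 0 < d -> T d (p f).
  move=> d0; exists f => //; split => // j.
  by rewrite subrr normr0 ltW.
have hS : has_sup [set inf (T d) | d in [set d : R | 0 < d]].
  split; first by exists (inf (T 1)); exists 1 => //; rewrite /= ltr01.
  exists (p f) => _ [d d0 <-]; apply: ge_inf; last exact: fT.
  by exists 0 => y /Tlb.
have [s [d d0 <-] Hs] := sup_adherent e0 hS.
exists d => // g cg Hg.
rewrite (plc f cf); apply: (lt_le_trans Hs); apply: ge_inf.
  by exists 0 => y /Tlb.
by exists g.
Qed.

Lemma vdiff f g d : (forall j, `|f j - g j| <= d) -> `|v f - v g| <= (\sum_j tau j) * d.
Proof.
move=> H; rewrite /linval -sumrB mulr_suml.
apply: le_trans (ler_norm_sum _ _ _) _; apply: ler_sum => j _.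
by rewrite -mulrBr normrM ger0_norm // ler_wpM2l.
Qed.
End Basic.

Section Attain.
Variables (R : realType) (m : nat) (tau : 'I_m -> R) (p : ('I_m -> R) -> R).
Hypotheses (tau0 : forall j, 0 <= tau j) (pf : pricing_function p)
  (plc : lower_continuous p).
Local Notation v := (linval tau).
Local Notation ph := (conv p).
Local Notation X := (R * 'rV[R]_m * 'rV[R]_m)%type.

Lemma cz_arith (a c P1 P2 Q1 Q2 d M eta : R) : 0 <= a <= 1 -> 0 <= c <= 1 ->
  0 <= P1 -> 0 <= P2 -> P1 - eta / 2 < Q1 -> P2 - eta / 2 < Q2 ->
  `|a - c| < d -> 0 < d -> P1 + P2 < M -> d * M <= eta / 2 ->
  a * P1 + (1 - a) * P2 - eta < c * Q1 + (1 - c) * Q2.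
Proof.
move=> /andP [t0 t1] /andP [u0 u1] hpf hpg pfw pgw Htd d0 hM dM.
have h1 : c * (P1 - eta / 2) + (1 - c) * (P2 - eta / 2) <=
    c * Q1 + (1 - c) * Q2.
  apply: lerD; apply: ler_wpM2l; lra.
have h2a : `|(c - a) * (P1 - P2)| <= d * (P1 + P2).
  rewrite normrM; apply: ler_pM => //.
    by rewrite distrC; apply: ltW.
  by rewrite ler_norml; apply/andP; split; lra.
have h2b : d * (P1 + P2) < d * M by rewrite ltr_pM2l.
move: h2a; rewrite ler_norml => /andP [h2 _].
have E : c * (P1 - eta / 2) + (1 - c) * (P2 - eta / 2) =
   a * P1 + (1 - a) * P2 + (c - a) * (P1 - P2) - eta / 2 by ring.
move: h1 h2 h2b dM; rewrite E; set Q := (c - a) * (P1 - P2).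
set DM := d * M; set DP := d * (P1 + P2).
set X := a * P1 + (1 - a) * P2; set Y := c * Q1 + (1 - c) * Q2.
clearbody Q DM DP X Y; lra.
Qed.

Lemma psi_arith (a c V1 V2 W1 W2 d S eta : R) : 0 <= a <= 1 -> 0 <= c <= 1 ->
  0 <= V1 -> 0 <= V2 -> V1 <= S -> V2 <= S ->
  `|W1 - V1| <= S * d -> `|W2 - V2| <= S * d -> `|a - c| < d -> 0 <= S ->
  S * d < eta / 2 ->
  `|c * W1 + (1 - c) * W2 - (a * V1 + (1 - a) * V2)| < eta.
Proof.
move=> /andP [t0 t1] /andP [u0 u1] v1 v2 v1S v2S h1 h2 hd S0 hSd.
have E : c * W1 + (1 - c) * W2 - (a * V1 + (1 - a) * V2) =
  (c * (W1 - V1) + (1 - c) * (W2 - V2)) + (c - a) * (V1 - V2) by ring.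
rewrite E; apply: le_lt_trans (ler_normD _ _) _.
have k1 : `|c * (W1 - V1) + (1 - c) * (W2 - V2)| <= S * d.
  apply: le_trans (ler_normD _ _) _.
  rewrite !normrM (ger0_norm u0) (@ger0_norm _ (1 - c)); last by lra.
  have -> : S * d = c * (S * d) + (1 - c) * (S * d) by ring.
  by apply: lerD; apply: ler_wpM2l => //; lra.
have k2 : `|(c - a) * (V1 - V2)| <= d * S.
  rewrite normrM; apply: ler_pM => //.
    by rewrite distrC ltW.
  by rewrite ler_norml; apply/andP; split; lra.
move: k1 k2 hSd; rewrite (mulrC d S); set Y := S * d; clearbody Y; lra.
Qed.

Lemma ballX (z w : X) (e : R) : ball z e w ->
  `|z.1.1 - w.1.1| < e /\ (forall j, `|z.1.2 ord0 j - w.1.2 ord0 j| < e)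
   /\ (forall j, `|z.2 ord0 j - w.2 ord0 j| < e).
Proof.
case: z => [[t1 r1] s1]; case: w => [[t2 r2] s2] /= [[H1 H2] H3].
split; first exact: H1.
move: H2 H3 => [_ H2] [_ H3].
by split => j; [exact: (H2 ord0 j) | exact: (H3 ord0 j)].
Qed.

Definition tz (z : X) := z.1.1.
Definition fz (z : X) := fun j => z.1.2 ord0 j.
Definition gz (z : X) := fun j => z.2 ord0 j.
Definition Cz (z : X) := tz z * p (fz z) + (1 - tz z) * p (gz z).
Definition Psi (z : X) := tz z * v (fz z) + (1 - tz z) * v (gz z).

Definition Icube := [set r : 'rV[R]_m | forall i, (`[0, 1]%classic : set R) (r ord0 i)].
Definition A : set X := ((`[0, 1]%classic : set R) `*` Icube) `*` Icube.

Lemma Icube_compact : compact Icube.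
Proof.
have := (@rV_compact R m (fun _ => `[0, 1]%classic) (fun _ => @segment_compact R 0 1)).
rewrite /Icube.
move=> H. exact: H.
Qed.

Lemma A_compact : compact A.
Proof.
apply: compact_setX; last exact: Icube_compact.
apply: compact_setX; first exact: segment_compact.
exact: Icube_compact.
Qed.

Lemma inI01 (x : R) : (`[0, 1]%classic : set R) x <-> 0 <= x <= 1.
Proof. by rewrite /= in_itv. Qed.

Lemma AP z : A z -> [/\ 0 <= tz z <= 1, cube (fz z) & cube (gz z)].
Proof.
case: z => [[t r] s] [[/= Ht Hr] Hs]; split.
- by apply/inI01.
- by move=> j; apply/inI01; apply: Hr.
- by move=> j; apply/inI01; apply: Hs.
Qed.

Lemma approx z eta : A z -> 0 < eta -> exists2 d, 0 < d & forall w, A w -> ball z d w ->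
  Cz z - eta < Cz w /\ `|Psi w - Psi z| < eta.
Proof.
move=> Az e0; have [t01 cf cg] := AP Az.
have e20 : 0 < eta / 2 by rewrite divr_gt0.
have [d1 d10 H1] := lsc_approx pf plc cf e20.
have [d2 d20 H2] := lsc_approx pf plc cg e20.
set M := p (fz z) + p (gz z) + 1.
set T := \sum_j tau j + 1.
have hpf := p_ge0 pf cf; have hpg := p_ge0 pf cg.
have M0 : 0 < M by rewrite /M; lra.
have hT : 0 <= \sum_j tau j by apply: sumr_ge0 => j _; exact: tau0.
have T0 : 0 < T by rewrite /T; lra.
set d := Num.min (Num.min d1 d2) (Num.min (eta / (2 * M)) (eta / (4 * T))).
have d0 : 0 < d by rewrite !lt_min d10 d20 !divr_gt0 ?mulr_gt0.
exists d => // w Aw /ballX [Ht [Hf Hg]].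
have [tw01 cfw cgw] := AP Aw.
have dd1 : d <= d1 by rewrite /d !ge_min lexx.
have dd2 : d <= d2 by rewrite /d !ge_min lexx orbT.
have dd3 : d <= eta / (2 * M) by rewrite /d !ge_min lexx !orbT.
have dd4 : d <= eta / (4 * T) by rewrite /d !ge_min lexx !orbT.
have Hf' j : `|fz w j - fz z j| <= d by rewrite distrC; apply: ltW; exact: Hf.
have Hg' j : `|gz w j - gz z j| <= d by rewrite distrC; apply: ltW; exact: Hg.
have pfw : p (fz z) - eta / 2 < p (fz w).
  by apply: H1 => // j; apply: le_trans (Hf' j) dd1.
have pgw : p (gz z) - eta / 2 < p (gz w).
  by apply: H2 => // j; apply: le_trans (Hg' j) dd2.
have Htd : `|tz z - tz w| < d by exact: Ht.
have dM : d * M <= eta / 2.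
  by rewrite -ler_pdivlMr // -mulrA -invfM mulrC; move: dd3; rewrite mulrC.
have dT : d * T <= eta / 4.
  by rewrite -ler_pdivlMr // -mulrA -invfM mulrC; move: dd4; rewrite mulrC.
split.
- rewrite /Cz; apply: cz_arith t01 tw01 hpf hpg pfw pgw Htd d0 _ dM.
  by rewrite /M; lra.
- rewrite /Psi; apply: (psi_arith t01 tw01 (v_ge0 tau0 cf) (v_ge0 tau0 cg)
    (v_le tau0 cf) (v_le tau0 cg) (vdiff tau0 Hf') (vdiff tau0 Hg') Htd hT).
  have : (\sum_j tau j) * d <= T * d by rewrite ler_pM2r // /T lerDl.
  have : T * d <= eta / 4 by rewrite mulrC.
  lra.
Qed.

Lemma attain (b U : R) :
  (forall e, 0 < e -> exists y, [/\ cube y, ph y <= b & U - e < v y - ph y]) ->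
  exists t f g, [/\ 0 <= t <= 1, cube f, cube g, t * p f + (1 - t) * p g <= b &
     U <= t * v f + (1 - t) * v g - (t * p f + (1 - t) * p g)].
Proof.
move=> hU.
pose K e := [set z | A z /\ Cz z <= b + e /\ U - e <= Psi z - Cz z].
have Kmono e e' : e <= e' -> K e `<=` K e'.
  move=> ee z [Az [H1 H2]]; split => //; split; lra.
have Kne e : 0 < e -> K e !=set0.
  move=> e0; have e20 : 0 < e / 2 by rewrite divr_gt0.
  have [y [cy hy Hy]] := hU _ e20.
  have [k [lam [xs [Hl H1 Hc Hx Hcost]]]] := ph_rep pf cy e20.
  have [i [j [t [t01 Ht Hw]]]] := two_point (fun i => v (xs i) - p (xs i)) Hl H1
     (le_trans Hcost (lerD hy (lexx _))).
  exists ((t, \row_j0 xs i j0), \row_j0 xs j j0).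
  have Ef : fz ((t, \row_j0 xs i j0), \row_j0 xs j j0) = xs i.
    by apply: funext => j0; rewrite /fz /= mxE.
  have Eg : gz ((t, \row_j0 xs i j0), \row_j0 xs j j0) = xs j.
    by apply: funext => j0; rewrite /gz /= mxE.
  set pt := ((t, \row_j0 xs i j0), \row_j0 xs j j0) in Ef Eg *.
  suff : A pt /\ Cz pt <= b + e /\ U - e <= Psi pt - Cz pt by [].
  rewrite /Cz /Psi Ef Eg /tz /=; split; last split.
  - split; first split.
    + by apply/inI01.
    + by move=> j0; rewrite mxE; apply/inI01; exact: Hc.
    + by move=> j0; rewrite mxE; apply/inI01; exact: Hc.
  - lra.
  - have Ev : v y = \sum_i0 lam i0 * v (xs i0) by rewrite Hx vcomb.
    have Esum : \sum_i0 lam i0 * (v (xs i0) - p (xs i0)) =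
        v y - \sum_i0 lam i0 * p (xs i0).
      by rewrite Ev -sumrB; apply: eq_bigr => i0 _; ring.
    move: Hw; rewrite Esum.
    have -> : t * (v (xs i) - p (xs i)) + (1 - t) * (v (xs j) - p (xs j)) =
      t * v (xs i) + (1 - t) * v (xs j) - (t * p (xs i) + (1 - t) * p (xs j)) by ring.
    lra.
pose F := filter_from [set e : R | 0 < e] K.
have FF : ProperFilter F.
  apply: filter_from_proper; last by move=> e /Kne.
  apply: filter_from_filter; first by exists 1; rewrite /= ltr01.
  move=> e1 e2 e10 e20; exists (Num.min e1 e2); first by rewrite /= lt_min e10 e20.
  move=> z Kz; split; apply: (Kmono _ _ _ _ Kz); by rewrite ge_min lexx ?orbT.
have FA : F A.
  by exists 1; [rewrite /= ltr01 | move=> z []].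
have [z [Az Cl]] := A_compact FF FA.
have [t01 cf cg] := AP Az.
have key eta : 0 < eta -> Cz z < b + 2 * eta /\ U - 3 * eta < Psi z - Cz z.
  move=> e0; have [d d0 Hd] := approx Az e0.
  have [w [[Aw [Kw1 Kw2]] Bw]] := Cl (K eta) (ball z d) (ex_intro2 _ _ eta e0 (fun _ h => h)) (nbhsx_ballx z d d0).
  have [h1 h2] := Hd w Aw Bw.
  move: h2; rewrite ltr_norml => /andP [h2 h3].
  split; lra.
exists (tz z), (fz z), (gz z); split => //.
- apply/ler_addgt0Pr => e e0.
  have e2 : 0 < e / 2 by rewrite divr_gt0.
  have [h _] := key (e / 2) e2.
  rewrite /Cz in h; lra.
- rewrite -/(Cz z) -/(Psi z).
  apply/ler_addgt0Pr => e e0.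
  have e3 : 0 < e / 3 by rewrite divr_gt0.
  have [_ h] := key (e / 3) e3.
  lra.
Qed.
End Attain.

Section T.
Variable R : realType.
Lemma shift1 (pf pg vf vg t b U Us : R) : 0 <= t <= 1 -> Us < U ->
  pf <= b -> b < pg -> vf - pf <= Us ->
  t * pf + (1 - t) * pg < b -> U <= t * vf + (1 - t) * vg - (t * pf + (1 - t) * pg) ->
  (forall s, 0 <= s <= 1 -> s * pf + (1 - s) * pg <= b ->
     s * vf + (1 - s) * vg - (s * pf + (1 - s) * pg) <= U) -> False.
Proof.
move=> /andP [t0 t1] hU hf hg hvf hc hv H.
have tp : 0 < t.
  rewrite lt_neqAle t0 andbT; apply/negP => /eqP t00.
  by move: hc; rewrite -t00 mul0r add0r subr0 mul1r; lra.
have tl : t < 1.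
  rewrite lt_neqAle t1 andbT; apply/negP => /eqP t11.
  by move: hv; rewrite t11 subrr !mul0r !addr0 !mul1r; lra.
have hvg : U < vg - pg.
  have E : t * vf + (1 - t) * vg - (t * pf + (1 - t) * pg) =
    t * (vf - pf) + (1 - t) * (vg - pg) by ring.
  rewrite E in hv.
  have h1 : t * (vf - pf) <= t * Us by rewrite ler_wpM2l.
  have h2 : t * Us < t * U by rewrite ltr_pM2l.
  have h3 : (1 - t) * U < (1 - t) * (vg - pg).
    have -> : (1 - t) * U = U - t * U by ring.
    lra.
  by move: h3; rewrite ltr_pM2l // subr_gt0.
have dpos : 0 < pg - pf by lra.
set c := t * pf + (1 - t) * pg.
set sg := Num.min t ((b - c) / (pg - pf)).
have sg0 : 0 < sg by rewrite lt_min tp divr_gt0 // subr_gt0.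
have sgt : sg <= t by rewrite ge_min lexx.
have sgc : sg * (pg - pf) <= b - c.
  by rewrite -ler_pdivlMr // ge_min lexx orbT.
have := H (t - sg).
have -> : (t - sg) * pf + (1 - (t - sg)) * pg = c + sg * (pg - pf) by rewrite /c; ring.
have -> : (t - sg) * vf + (1 - (t - sg)) * vg - (c + sg * (pg - pf)) =
  (t * vf + (1 - t) * vg - c) + sg * ((vg - pg) - (vf - pf)) by rewrite /c; ring.
have k : 0 < sg * ((vg - pg) - (vf - pf)) by rewrite mulr_gt0 //; lra.
move: hv; rewrite -/c => hv.
have hs01 : 0 <= t - sg <= 1 by apply/andP; split; lra.
have hcb : c + sg * (pg - pf) <= b by lra.
move=> /(_ hs01 hcb); lra.
Qed.
Lemma shift_arith (pf pg vf vg t b U Us : R) : 0 <= t <= 1 -> Us < U ->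
  (pf <= b -> vf - pf <= Us) -> (pg <= b -> vg - pg <= Us) ->
  t * pf + (1 - t) * pg < b -> U <= t * vf + (1 - t) * vg - (t * pf + (1 - t) * pg) ->
  (forall s, 0 <= s <= 1 -> s * pf + (1 - s) * pg <= b ->
     s * vf + (1 - s) * vg - (s * pf + (1 - s) * pg) <= U) -> False.
Proof.
move=> t01 hU hf hg hc hv H.
have [t0 t1] : 0 <= t /\ t <= 1 by case/andP: t01.
case: (lerP pf b) => pfb; case: (lerP pg b) => pgb.
- have h1 := hf pfb; have h2 := hg pgb.
  have E : t * vf + (1 - t) * vg - (t * pf + (1 - t) * pg) =
    t * (vf - pf) + (1 - t) * (vg - pg) by ring.
  rewrite E in hv.
  have k1 : t * (vf - pf) <= t * Us by rewrite ler_wpM2l.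
  have k2 : (1 - t) * (vg - pg) <= (1 - t) * Us by rewrite ler_wpM2l // subr_ge0.
  have : t * Us + (1 - t) * Us = Us by ring.
  lra.
- exact: (shift1 t01 hU pfb pgb (hf pfb) hc hv H).
- have t01' : 0 <= 1 - t <= 1 by apply/andP; split; lra.
  have hc' : (1 - t) * pg + (1 - (1 - t)) * pf < b.
    by have -> : (1 - t) * pg + (1 - (1 - t)) * pf = t * pf + (1 - t) * pg by ring.
  have hv' : U <= (1 - t) * vg + (1 - (1 - t)) * vf - ((1 - t) * pg + (1 - (1 - t)) * pf).
    by have -> : (1 - t) * vg + (1 - (1 - t)) * vf - ((1 - t) * pg + (1 - (1 - t)) * pf) =
        t * vf + (1 - t) * vg - (t * pf + (1 - t) * pg) by ring.
  apply: (shift1 t01' hU pgb pfb (hg pgb) hc' hv').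
  move=> s s01 hs.
  have s01' : 0 <= 1 - s <= 1 by case/andP: s01 => ? ?; apply/andP; split; lra.
  have := H (1 - s) s01'.
  have -> : (1 - s) * pf + (1 - (1 - s)) * pg = s * pg + (1 - s) * pf by ring.
  have -> : (1 - s) * vf + (1 - (1 - s)) * vg - (s * pg + (1 - s) * pf) =
     s * vg + (1 - s) * vf - (s * pg + (1 - s) * pf) by ring.
  by move=> /(_ hs).
- have : b < t * pf + (1 - t) * pg.
    have -> : t * pf + (1 - t) * pg = b + (t * (pf - b) + (1 - t) * (pg - b)) by ring.
    rewrite ltrDl.
    case: (ltrP 0 t) => tp.
      by apply: ltr_pwDl; [rewrite mulr_gt0 // subr_gt0 | rewrite mulr_ge0 // subr_ge0 // ltW].
    have -> : t = 0 by apply/eqP; rewrite eq_le tp t0.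
    by rewrite mul0r add0r subr0 mul1r subr_gt0.
  lra.
Qed.
End T.

Unset Implicit Arguments.

Theorem mainTheorem16 (R : realType) (m : nat) (tau : 'I_m -> R) (b : R)
    (p : ('I_m -> R) -> R) :
  (forall j, 0 <= tau j) -> 0 <= b ->
  pricing_function p -> lower_continuous p ->
  (revenue p (linval tau) b <= revenue (conv p) (linval tau) b)%E.
Proof.
move=> tau0 b0 pf plc.
set v := linval tau.
have p00 : p (fun _ => 0) = 0 by case: pf.
have [U hUdef] : exists U, ustar (conv p) v b = U%:E.
  case E: (ustar (conv p) v b) => [U| |]; first by exists U.
  - exfalso.
    have : (ustar (conv p) v b <= (\sum_j tau j)%:E)%E.
      apply: ge_ereal_sup => _ [x [cx _] <-]; rewrite lee_fin.
      have := ph_ge0 pf cx; have := v_le tau0 cx; rewrite /v; lra.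
    by rewrite E.
  - exfalso.
    have : ((v (fun _ => 0) - conv p (fun _ => 0))%:E <= ustar (conv p) v b)%E.
      apply: ereal_sup_ubound; exists (fun _ => 0) => //; split; first exact: cube0.
      by apply: le_trans (ph_le_p pf (@cube0 R m)) _; rewrite p00.
    by rewrite E.
have hUb x : cube x -> conv p x <= b -> v x - conv p x <= U.
  move=> cx hx; rewrite -lee_fin -hUdef; apply: ereal_sup_ubound.
  by exists x.
have hUe e : 0 < e -> exists y, [/\ cube y, conv p y <= b & U - e < v y - conv p y].
  move=> e0; have : ((U - e)%:E < ustar (conv p) v b)%E.
    by rewrite hUdef lte_fin; lra.
  move=> /ereal_sup_gt [_ [y [cy hy] <-]]; rewrite lte_fin => H.
  by exists y.
apply: ge_ereal_sup => _ [x [[cx px] Hx] <-].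
set Us := v x - p x.
have HUs z : cube z -> p z <= b -> v z - p z <= Us.
  move=> cz hz; rewrite -lee_fin /Us Hx; apply: ereal_sup_ubound.
  by exists z.
suff [y Dy hpy] : exists2 y, demand (conv p) v b y & p x <= conv p y.
  apply: le_ereal_sup_tmp; exists (conv p y)%:E; last by rewrite lee_fin.
  by exists y.
have hxle := ph_le_p pf cx.
case: (lerP U Us) => hUU.
  have := hUb x cx (le_trans hxle px).
  move=> H1; exists x; last by rewrite /Us in hUU; lra.
  split; first by split => //; exact: le_trans hxle px.
  rewrite hUdef; congr (_%:E); rewrite /Us in hUU; lra.
have [t [f [g [t01 cf cg hcost hval]]]] := attain tau0 pf plc hUe.
have cy := cube2 t01 cf cg.
have hph := ph2 pf t01 cf cg.
have hv2 := v2 tau t f g.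
have hU2 := hUb _ cy (le_trans hph hcost).
rewrite -/v in hv2 hval.
have hcb : b <= t * p f + (1 - t) * p g.
  rewrite leNgt; apply/negP => hlt.
  apply: (shift_arith t01 hUU (HUs f cf) (HUs g cg) hlt hval).
  move=> s s01 hs.
  have cs := cube2 s01 cf cg.
  have := hUb _ cs (le_trans (ph2 pf s01 cf cg) hs).
  have := ph2 pf s01 cf cg; have := v2 tau s f g; rewrite -/v; lra.
exists (comb2 t f g); last by lra.
split; first by split => //; exact: le_trans hph hcost.
rewrite hUdef; congr (_%:E); lra.
Qed.
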